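(* Let $x,y$ be fixed real (or complex) numbers. For each such $x$ let $\kappa_x:\mathbb{Z}_{>0}\to\mathbb{C}$ be the recursive divisor function defined by $$\kappa_x(n) = n^x + \sum_{d \mid n,\ d<n} \kappa_x(d)\qquad (n\ge 1).$$ Then the following identities of arithmetic functions hold: 1. $\kappa_x * \sigma_y = \kappa_y * \sigma_x$; 2. $\kappa_x = (\mathrm{id}_x + \mathbf{1} * \kappa_x)/2$; 3. $\kappa_x = \dfrac{\mathrm{id}_x}{2} + \dfrac{\mathbf{1}*\mathrm{id}_x}{2^2} + \dfrac{\mathbf{1}*\mathbf{1}*\mathrm{id}_x}{2^3} + \cdots$, i.e. $\kappa_x(n)=\sum_{k\ge 0} 2^{-(k+1)}(\mathbf{1}^{*k}*\mathrm{id}_x)(n)$ for every $n$, where $\mathbf{1}^{*k}$ is the $k$-fold Dirichlet convolution power of $\mathbf{1}$ (with $\mathbf{1}^{*0}=\varepsilon$); 4. $\kappa_x = J_x * \kappa_0$; 5. $\kappa_x^{-1} = J_x^{-1} * (2\mu - \varepsilon)$; 6. $\sigma_x = \kappa_x * (2\cdot\mathbf{1} - d)$.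
   Context: Arithmetic functions are functions $\mathbb{Z}_{>0}\to\mathbb{C}$, added and scaled pointwise. $f*g$ denotes Dirichlet convolution, $(f*g)(n)=\sum_{d\mid n} f(d)g(n/d)$, and $f^{-1}$ denotes the Dirichlet inverse of $f$ (which exists when $f(1)\neq 0$). Notation: $\varepsilon(n)=1$ if $n=1$ and $0$ otherwise; $\mathbf{1}(n)=1$ for all $n$; $\mathrm{id}_x(n)=n^x$; $\mu$ is the Möbius function; $\sigma_x(n)=\sum_{d\mid n} d^x$; $d(n)=\sigma_0(n)$ is the number of divisors of $n$; $J_x=\mu*\mathrm{id}_x$ is Jordan's totient function (so $J_0=\varepsilon$ and $J_1=\phi$); $\kappa_0$ is $\kappa_x$ with $x=0$. *)

(* Defs.v *)
From Stdlib Require Import Reals.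
From Coquelicot Require Import Coquelicot.
From mathcomp Require Import ssreflect ssrfun ssrbool eqtype ssrnat seq div prime.

(* Arithmetic functions Z_{>0} -> C are represented as nat -> C;
   the value at 0 is irrelevant and never constrained. *)
Definition arith := nat -> C.

Definition sumC (l : seq nat) (F : nat -> C) : C :=
  foldr (fun d acc => Cplus (F d) acc) (RtoC 0) l.

Definition dconv (f g : arith) : arith :=
  fun n => sumC (divisors n) (fun d => Cmult (f d) (g ((n %/ d)%N))).

Definition aeq (f g : arith) : Prop := forall n : nat, (0 < n)%N -> f n = g n.

(* principal complex power n^z = exp(z log n) for a positive integer n *)
Definition cpow (n : nat) (z : C) : C :=
  let L := ln (INR n) in
  Cmult (RtoC (exp (Re z * L)%R)) (cos (Im z * L)%R, sin (Im z * L)%R).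

Definition idf (x : C) : arith := fun n => cpow n x.
Definition epsf : arith := fun n => if (n == 1)%N then RtoC 1 else RtoC 0.
Definition onef : arith := fun _ => RtoC 1.

Definition moebius : arith := fun n =>
  if all (fun p => (logn p n == 1)%N) (primes n)
  then RtoC ((-1) ^ size (primes n))%R else RtoC 0.

Definition dsigma (x : C) : arith := fun n => sumC (divisors n) (fun d => cpow d x).
Definition ndiv : arith := dsigma (RtoC 0).

Definition jordan (x : C) : arith := dconv moebius (idf x).

(* recursive divisor function:
   kappa_x(n) = n^x + sum_{d | n, d < n} kappa_x(d); fuel-based, with fuel n
   sufficient since proper divisors are smaller. *)
Fixpoint kappa_aux (fuel : nat) (x : C) (n : nat) : C :=
  match fuel with
  | 0 => RtoC 0
  | S k => Cplus (cpow n x)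
             (sumC (filter (fun d => (d < n)%N) (divisors n)) (fun d => kappa_aux k x d))
  end.
Definition kappa (x : C) : arith := fun n => kappa_aux n x n.

(* Dirichlet inverse (for f(1) <> 0):
   f^{-1}(1) = 1/f(1), f^{-1}(n) = -1/f(1) * sum_{d|n, d<n} f(n/d) f^{-1}(d). *)
Fixpoint dinv_aux (fuel : nat) (f : arith) (n : nat) : C :=
  match fuel with
  | 0 => RtoC 0
  | S k => if (n == 1)%N then Cinv (f 1%N)
           else Cmult (Copp (Cinv (f 1%N)))
                  (sumC (filter (fun d => (d < n)%N) (divisors n))
                        (fun d => Cmult (f ((n %/ d)%N)) (dinv_aux k f d)))
  end.
Definition dinv (f : arith) : arith := fun n => dinv_aux n f n.

Definition onepow (k : nat) : arith := iter k (dconv onef) epsf.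

Definition addf (f g : arith) : arith := fun n => Cplus (f n) (g n).
Definition subf (f g : arith) : arith := fun n => Cminus (f n) (g n).
Definition scalf (c : C) (f : arith) : arith := fun n => Cmult c (f n).

(* Main.v *)
Require Import Defs.
From Stdlib Require Import Reals Lra Lia Morphisms Setoid.
From Coquelicot Require Import Coquelicot.

Lemma geom_half_small (a eps : R) : 0 < eps -> exists j0 : nat, forall j, (j0 <= j)%nat -> a * (/2) ^ j < eps.
Proof.
intros Heps.
assert (Hg := is_lim_seq_geom (/2) ltac:(rewrite Rabs_pos_eq; lra)).
apply is_lim_seq_spec in Hg.
assert (Ha : 0 < eps / (Rabs a + 1)) by (apply Rdiv_lt_0_compat; [lra | pose proof (Rabs_pos a); lra]).
destruct (Hg (mkposreal _ Ha)) as [j0 Hj0].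
exists j0; intros j Hj; specialize (Hj0 j Hj); simpl in Hj0.
rewrite Rminus_0_r in Hj0.
assert (Hq : 0 <= (/2)^j) by (apply pow_le; lra).
rewrite Rabs_pos_eq in Hj0 by exact Hq.
apply Rle_lt_trans with (Rabs a * (/2)^j).
{ apply Rmult_le_compat_r; [exact Hq | apply Rle_abs]. }
apply Rle_lt_trans with (Rabs a * (eps / (Rabs a + 1))).
{ apply Rmult_le_compat_l; [apply Rabs_pos | lra]. }
assert (HA := Rabs_pos a).
apply Rmult_lt_reg_r with (Rabs a + 1); [lra|].
field_simplify; [|lra]. nra.
Qed.

Lemma lim_avg (u c : nat -> R) (l : R) :
  is_lim_seq c l -> (forall K, u (S K) = (c K + u K) / 2) -> is_lim_seq u l.
Proof.
intros Hc Hu.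
apply is_lim_seq_spec in Hc; apply is_lim_seq_spec.
intros eps.
destruct (Hc (mkposreal (eps / 2) ltac:(destruct eps; simpl; lra))) as [N HN]; simpl in HN.
assert (Hind : forall j, Rabs (u (N + j)%nat - l) <= Rabs (u N - l) * (/2)^j + eps / 2).
{ induction j as [|j IH].
  - rewrite Nat.add_0_r; simpl; destruct eps; simpl; lra.
  - replace (N + S j)%nat with (S (N + j)) by lia.
    rewrite Hu.
    specialize (HN (N + j)%nat ltac:(lia)).
    replace ((c (N + j)%nat + u (N + j)%nat) / 2 - l)
      with ((c (N + j)%nat - l) / 2 + (u (N + j)%nat - l) / 2) by field.
    eapply Rle_trans; [apply Rabs_triang|].
    unfold Rdiv; rewrite !Rabs_mult, (Rabs_pos_eq (/2)) by lra.
    simpl. destruct eps as [e He]; simpl in *. nra. }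
destruct (geom_half_small (Rabs (u N - l)) (eps / 2) ltac:(destruct eps; simpl; lra)) as [j0 Hj0].
exists (N + j0)%nat; intros K HK.
replace K with (N + (K - N))%nat by lia.
eapply Rle_lt_trans; [apply Hind|].
specialize (Hj0 (K - N)%nat ltac:(lia)).
destruct eps; simpl in *; lra.
Qed.

Lemma Clim_comp (v : nat -> C) (l : C) :
  is_lim_seq (fun K => fst (v K)) (fst l) -> is_lim_seq (fun K => snd (v K)) (snd l) ->
  @filterlim nat C v eventually
    (@locally (NormedModule.UniformSpace C_AbsRing C_NormedModule) l).
Proof.
intros H1 H2.
apply is_lim_seq_spec in H1; apply is_lim_seq_spec in H2.
apply filterlim_locally; intros eps.
generalize (filter_and _ _ (H1 eps) (H2 eps)).
apply filter_imp; intros K [HK1 HK2].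
split; [exact HK1 | exact HK2].
Qed.

From mathcomp Require Import ssreflect ssrfun ssrbool eqtype ssrnat seq div prime.
From HB Require Import structures.
From mathcomp Require Import choice fintype bigop path.
Local Open Scope nat_scope.

Lemma Cplus_0l (a : C) : Cplus (RtoC 0) a = a. Proof. ring. Qed.
Lemma Cplus_A : associative Cplus. Proof. move=> a b c; ring. Qed.
Lemma Cplus_Co : commutative Cplus. Proof. move=> a b; ring. Qed.
HB.instance Definition _ := Monoid.isComLaw.Build C (RtoC 0) Cplus Cplus_A Cplus_Co Cplus_0l.

Notation "\csum_ ( i <- r | P ) F" := (\big[Cplus/RtoC 0]_(i <- r | P) F)
  (at level 41, F at level 41, i, r at level 50).
Notation "\csum_ ( i <- r ) F" := (\big[Cplus/RtoC 0]_(i <- r) F)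
  (at level 41, F at level 41, i, r at level 50).

Lemma sumCE l F : sumC l F = \csum_(d <- l) F d.
Proof. elim: l => [|a l IH]; by rewrite ?big_nil ?big_cons //= IH. Qed.

Lemma csum_mull c I (r : seq I) (P : pred I) F :
  Cmult c (\csum_(i <- r | P i) F i) = \csum_(i <- r | P i) Cmult c (F i).
Proof.
apply: (big_ind2 (fun a b => Cmult c a = b)); first by ring.
  by move=> a b a' b' <- <-; ring.
by [].
Qed.

Lemma csum_mulr c I (r : seq I) (P : pred I) F :
  Cmult (\csum_(i <- r | P i) F i) c = \csum_(i <- r | P i) Cmult (F i) c.
Proof. rewrite Cmult_comm csum_mull; apply: eq_bigr => i _; ring. Qed.

Lemma csum0 I (r : seq I) (P : pred I) F :
  (forall i, P i -> F i = RtoC 0) -> \csum_(i <- r | P i) F i = RtoC 0.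
Proof. move=> H; exact: big1. Qed.




Definition dpairs n := [seq (d, n %/ d) | d <- divisors n].

Lemma mem_div n d : 0 < n -> (d \in divisors n) = (d %| n).
Proof. by move=> Hn; rewrite dvdn_divisors. Qed.

Lemma mem_dpairs n p : 0 < n -> (p \in dpairs n) = (p.1 * p.2 == n).
Proof.
move=> Hn; apply/mapP/idP => [[d Hd ->] | /eqP Hp].
  move: Hd; rewrite mem_div // => Hdn /=.
  by rewrite mulnC divnK.
exists p.1; first by rewrite mem_div // -Hp dvdn_mulr.
have Hp1 : 0 < p.1 by move: Hn; rewrite -Hp; case: p.1.
by rewrite -Hp mulKn //; case: p {Hp Hp1}.
Qed.

Lemma uniq_dpairs n : uniq (dpairs n).
Proof.
rewrite map_inj_uniq ?divisors_uniq //.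
by move=> a b [].
Qed.

Lemma dconvE f g n : dconv f g n = \csum_(p <- dpairs n) Cmult (f p.1) (g p.2).
Proof. by rewrite /dconv sumCE big_map. Qed.

Lemma dconvC f g n : 0 < n -> dconv f g n = dconv g f n.
Proof.
move=> Hn; rewrite !dconvE.
have Hp : perm_eq (dpairs n) [seq (p.2, p.1) | p <- dpairs n].
  apply: uniq_perm; first exact: uniq_dpairs.
    by rewrite map_inj_uniq ?uniq_dpairs // => [[a b] [c d]] [-> ->].
  move=> [a b]; rewrite mem_dpairs //.
  apply/idP/mapP => [H1 | [[c d] Hcd [-> ->]]].
    by exists (b, a) => //; rewrite mem_dpairs // mulnC.
  by move: Hcd; rewrite mem_dpairs //= mulnC.
rewrite (perm_big _ Hp) big_map; apply: eq_bigr => p _ /=; ring.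
Qed.

Lemma dpairs_pos n p : 0 < n -> p \in dpairs n -> [/\ 0 < p.1, 0 < p.2 & p.1 * p.2 = n].
Proof.
move=> Hn; rewrite mem_dpairs // => /eqP Hp.
by move: Hn; rewrite -Hp muln_gt0 => /andP[-> ->].
Qed.

Definition L1 n := [seq (q.1, q.2, p.2) | p <- dpairs n, q <- dpairs p.1].
Definition L2 n := [seq (p.1, q.1, q.2) | p <- dpairs n, q <- dpairs p.2].

Lemma mem_L1 n t : 0 < n -> (t \in L1 n) = (t.1.1 * t.1.2 * t.2 == n).
Proof.
move=> Hn; apply/allpairsPdep/idP => [[p [q [Hp Hq ->]]] | /eqP Ht].
  have [H1 H2 H3] := dpairs_pos _ _ Hn Hp.
  have [H4 H5 H6] := dpairs_pos _ _ H1 Hq.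
  by rewrite /= H6 H3.
have Ha : 0 < t.1.1 * t.1.2 by move: Hn; rewrite -Ht muln_gt0 => /andP[].
exists (t.1.1 * t.1.2, t.2), (t.1.1, t.1.2); split.
- by rewrite mem_dpairs //= Ht.
- by rewrite mem_dpairs.
- by case: t {Ht Ha} => [[]].
Qed.

Lemma mem_L2 n t : 0 < n -> (t \in L2 n) = (t.1.1 * t.1.2 * t.2 == n).
Proof.
move=> Hn; apply/allpairsPdep/idP => [[p [q [Hp Hq ->]]] | /eqP Ht].
  have [H1 H2 H3] := dpairs_pos _ _ Hn Hp.
  have [H4 H5 H6] := dpairs_pos _ _ H2 Hq.
  by rewrite /= -mulnA H6 H3.
have Ha : 0 < t.1.2 * t.2 by move: Hn; rewrite -Ht -mulnA muln_gt0 => /andP[].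
exists (t.1.1, t.1.2 * t.2), (t.1.2, t.2); split.
- by rewrite mem_dpairs //= mulnA Ht.
- by rewrite mem_dpairs.
- by case: t {Ht Ha} => [[]].
Qed.

Lemma uniq_L1 n : 0 < n -> uniq (L1 n).
Proof.
move=> Hn; apply: allpairs_uniq_dep.
- exact: uniq_dpairs.
- by move=> p _; exact: uniq_dpairs.
move=> [p1 q1] [p2 q2] /allpairsPdep[x1 [y1 [Hx1 Hy1 [E1 E2]]]]
  /allpairsPdep[x2 [y2 [Hx2 Hy2 [E3 E4]]]] /= [Ea Eb Ec].
subst.
have [H1 H2 H3] := dpairs_pos _ _ Hn Hx1.
have [H4 H5 H6] := dpairs_pos _ _ H1 Hy1.
have [H1' H2' H3'] := dpairs_pos _ _ Hn Hx2.
have [H4' H5' H6'] := dpairs_pos _ _ H1' Hy2.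
have ex1 : x1 = x2.
  case: x1 x2 Ec H6 H6' {Hx1 Hx2 Hy1 Hy2 H1 H2 H3 H1' H2' H3' H4 H5 H4' H5'} => [a b] [c d] /= -> <- <-.
  by rewrite Ea Eb.
subst x2.
have ey1 : y1 = y2 by case: y1 y2 Ea Eb {Hy1 Hy2 H4 H5 H6 H4' H5' H6'} => [a b] [c d] /= -> ->.
by subst y2.
Qed.

Lemma uniq_L2 n : 0 < n -> uniq (L2 n).
Proof.
move=> Hn; apply: allpairs_uniq_dep.
- exact: uniq_dpairs.
- by move=> p _; exact: uniq_dpairs.
move=> [p1 q1] [p2 q2] /allpairsPdep[x1 [y1 [Hx1 Hy1 [E1 E2]]]]
  /allpairsPdep[x2 [y2 [Hx2 Hy2 [E3 E4]]]] /= [Ea Eb Ec].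
subst.
have [H1 H2 H3] := dpairs_pos _ _ Hn Hx1.
have [H4 H5 H6] := dpairs_pos _ _ H2 Hy1.
have [H1' H2' H3'] := dpairs_pos _ _ Hn Hx2.
have [H4' H5' H6'] := dpairs_pos _ _ H2' Hy2.
have ey1 : y1 = y2 by case: y1 y2 Eb Ec {Hy1 Hy2 H4 H5 H6 H4' H5' H6'} => [a b] [c d] /= -> ->.
subst y2.
have ex1 : x1 = x2.
  case: x1 x2 Ea H6 H6' {Hx1 Hx2 Hy1 Hy2 H1 H2 H3 H1' H2' H3' H4 H5 H4' H5'} => [a b] [c d] /= -> <- ->.
  by [].
by subst x2.
Qed.

Lemma dconvA f g h n : 0 < n -> dconv (dconv f g) h n = dconv f (dconv g h) n.
Proof.
move=> Hn; rewrite !dconvE.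
have -> : \csum_(p <- dpairs n) Cmult (dconv f g p.1) (h p.2) =
  \csum_(t <- L1 n) Cmult (Cmult (f t.1.1) (g t.1.2)) (h t.2).
  rewrite /L1 big_allpairs_dep /=; apply: eq_bigr => p _.
  by rewrite dconvE csum_mulr.
have -> : \csum_(p <- dpairs n) Cmult (f p.1) (dconv g h p.2) =
  \csum_(t <- L2 n) Cmult (Cmult (f t.1.1) (g t.1.2)) (h t.2).
  rewrite /L2 big_allpairs_dep /=; apply: eq_bigr => p _.
  rewrite dconvE csum_mull; apply: eq_bigr => q _ /=; ring.
apply: perm_big; apply: uniq_perm; rewrite ?uniq_L1 ?uniq_L2 //.
by move=> t; rewrite mem_L1 // mem_L2.
Qed.


#[export] Instance aeq_equiv : Equivalence aeq.
Proof.
split.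
- by move=> f n.
- by move=> f g H n Hn; rewrite H.
- by move=> f g h H1 H2 n Hn; rewrite H1 // H2.
Qed.

Lemma dconv_congr f f' g g' n : 0 < n -> aeq f f' -> aeq g g' -> dconv f g n = dconv f' g' n.
Proof.
move=> Hn Hf Hg; rewrite !dconvE; apply: eq_big_seq => p Hp.
have [H1 H2 _] := dpairs_pos _ _ Hn Hp.
by rewrite Hf // Hg.
Qed.

#[export] Instance dconv_proper : Proper (aeq ==> aeq ==> aeq) dconv.
Proof. by move=> f f' Hf g g' Hg n Hn; apply: dconv_congr. Qed.
#[export] Instance addf_proper : Proper (aeq ==> aeq ==> aeq) addf.
Proof. by move=> f f' Hf g g' Hg n Hn; rewrite /addf Hf // Hg. Qed.
#[export] Instance subf_proper : Proper (aeq ==> aeq ==> aeq) subf.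
Proof. by move=> f f' Hf g g' Hg n Hn; rewrite /subf Hf // Hg. Qed.
#[export] Instance scalf_proper c : Proper (aeq ==> aeq) (scalf c).
Proof. by move=> f f' Hf n Hn; rewrite /scalf Hf. Qed.

Lemma dconvC' f g : aeq (dconv f g) (dconv g f).
Proof. move=> n Hn; exact: dconvC. Qed.
Lemma dconvA' f g h : aeq (dconv (dconv f g) h) (dconv f (dconv g h)).
Proof. move=> n Hn; exact: dconvA. Qed.

Lemma dconv_split n F : 0 < n ->
  \csum_(d <- divisors n) F d = Cplus (F n) (\csum_(d <- filter (fun d => d < n) (divisors n)) F d).
Proof.
move=> Hn; rewrite (bigD1_seq n) ?divisors_id ?divisors_uniq //; apply: (congr1 (Cplus (F n))).
rewrite big_filter [in RHS]big_seq_cond [in LHS]big_seq_cond; apply: eq_bigl => d.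
rewrite mem_div //; case Hd: (d %| n) => //=.

by rewrite ltn_neqAle (dvdn_leq Hn Hd) andbT.
Qed.

Lemma dconv_eps f : aeq (dconv f epsf) f.
Proof.
move=> n Hn; rewrite /dconv sumCE dconv_split // divnn Hn /epsf /=.
rewrite big1_seq.
  by rewrite /=; ring.
move=> d /andP[_]; rewrite mem_filter mem_div // => /andP[Hlt Hdvd].
case: ifP => [/eqP H1|_]; last by ring.
move: Hlt; rewrite -[X in d < X](divnK Hdvd) H1 mul1n ltnn //.
Qed.

Lemma eps_dconv f : aeq (dconv epsf f) f.
Proof. by rewrite dconvC' dconv_eps. Qed.

Lemma dconvDl f g h : aeq (dconv (addf f g) h) (addf (dconv f h) (dconv g h)).
Proof.
move=> n Hn; rewrite /addf !dconvE -big_split; apply: eq_bigr => p _ /=; ring.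
Qed.
Lemma dconvBl f g h : aeq (dconv (subf f g) h) (subf (dconv f h) (dconv g h)).
Proof.
move=> n Hn; rewrite /subf !dconvE.
have -> : forall a b : C, Cminus a b = Cplus a (Cmult (RtoC (-1)) b) by move=> a b; ring.
rewrite csum_mull -big_split; apply: eq_bigr => p _ /=; ring.
Qed.
Lemma dconvZl c f h : aeq (dconv (scalf c f) h) (scalf c (dconv f h)).
Proof.
move=> n Hn; rewrite /scalf !dconvE csum_mull; apply: eq_bigr => p _ /=; ring.
Qed.
Lemma dconvBr f g h : aeq (dconv h (subf f g)) (subf (dconv h f) (dconv h g)).
Proof. by rewrite dconvC' dconvBl (dconvC' f) (dconvC' g). Qed.
Lemma dconvZr c f h : aeq (dconv h (scalf c f)) (scalf c (dconv h f)).
Proof. by rewrite dconvC' dconvZl dconvC'. Qed.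


Lemma proper_pos n d : 0 < n -> d \in filter (fun d => d < n) (divisors n) -> 0 < d /\ d < n.
Proof.
move=> Hn; rewrite mem_filter mem_div // => /andP[H1 H2]; split => //.
by apply: dvdn_gt0 H2.
Qed.

Lemma kappa_fuel x f1 : forall n f2, 0 < n -> n <= f1 -> n <= f2 ->
  kappa_aux f1 x n = kappa_aux f2 x n.
Proof.
elim: f1 => [|k1 IH] n [|k2] Hn H1 H2; try by case: n Hn H1 H2.
rewrite /= !sumCE; apply: (congr1 (Cplus _)); apply: eq_big_seq => d Hd.
have [Hd0 Hdn] := proper_pos _ _ Hn Hd.
apply: IH => //; rewrite -ltnS; exact: leq_trans Hdn _.
Qed.

Lemma kappa_rec x n : 0 < n ->
  kappa x n = Cplus (cpow n x) (\csum_(d <- filter (fun d => d < n) (divisors n)) kappa x d).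
Proof.
move=> Hn; rewrite /kappa; case: n Hn => [//|n] Hn /=.
rewrite sumCE; apply: (congr1 (Cplus _)); apply: eq_big_seq => d Hd.
have [Hd0 Hdn] := proper_pos _ _ Hn Hd.
apply: kappa_fuel => //.
Qed.

Lemma dinv_fuel f f1 : forall n f2, 0 < n -> n <= f1 -> n <= f2 ->
  dinv_aux f1 f n = dinv_aux f2 f n.
Proof.
elim: f1 => [|k1 IH] n [|k2] Hn H1 H2; try by case: n Hn H1 H2.
rewrite /=; case: ifP => // _.
rewrite !sumCE; apply: (congr1 (Cmult _)); apply: eq_big_seq => d Hd.
have [Hd0 Hdn] := proper_pos _ _ Hn Hd.
rewrite (IH d k2) //; rewrite -ltnS; exact: leq_trans Hdn _.
Qed.

Lemma dinv1 f : dinv f 1 = Cinv (f 1).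
Proof. by []. Qed.

Lemma dinv_rec f n : 1 < n ->
  dinv f n = Cmult (Copp (Cinv (f 1)))
   (\csum_(d <- filter (fun d => d < n) (divisors n)) Cmult (f (n %/ d)) (dinv f d)).
Proof.
move=> Hn; rewrite /dinv; case: n Hn => [//|n] Hn /=.
case: ifP => [/eqP H|_]; first by move: Hn; rewrite H.
rewrite sumCE; apply: (congr1 (Cmult _)); apply: eq_big_seq => d Hd.
have [Hd0 Hdn] := proper_pos _ _ (ltnW Hn) Hd.
rewrite (dinv_fuel _ _ d d) //.
Qed.

Lemma divisors_1 : divisors 1 = [:: 1].
Proof. by []. Qed.

Lemma dinv_r f : f 1 <> RtoC 0 -> aeq (dconv f (dinv f)) epsf.
Proof.
move=> Hf n Hn; rewrite dconvC // /dconv sumCE.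
case: (ltngtP n 1) => [|Hn1|->].
- by rewrite ltnS leqn0 => /eqP H; move: Hn; rewrite H.
- rewrite dconv_split ?divnn ?Hn // dinv_rec //.
  rewrite /epsf; case: ifP => [/eqP H|_]; first by move: Hn1; rewrite H.
  set S := \csum_(_ <- _) _.
  have -> : \csum_(d <- filter (fun d => d < n) (divisors n)) Cmult (dinv f d) (f (n %/ d)) = S.
    by apply: eq_bigr => d _; rewrite Cmult_comm.
  change (f (nat_of_bool true)) with (f 1); by field.
- change (divisors 1) with [:: 1]; rewrite big_cons big_nil /= /epsf /=.
  change (f (1 %/ 1)) with (f 1); rewrite dinv1; by field.
Qed.

Lemma dinv_unique f g : f 1 <> RtoC 0 -> aeq (dconv f g) epsf -> aeq g (dinv f).
Proof.
move=> Hf H.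
symmetry.
transitivity (dconv (dinv f) (dconv f g)); first by rewrite H dconv_eps.
by rewrite -dconvA' (dconvC' (dinv f)) dinv_r // eps_dconv.
Qed.


Lemma mu1 : moebius 1 = RtoC 1.
Proof. by rewrite /moebius /=. Qed.

Lemma mu_pdvd p e : prime p -> 0 < e -> p %| e -> moebius (p * e) = RtoC 0.
Proof.
move=> Hp He Hpe; rewrite /moebius.
have Hpe' : 0 < p * e by rewrite muln_gt0 prime_gt0.
case: ifP => // /allP H.
have : p \in primes (p * e) by rewrite mem_primes Hp Hpe' dvdn_mulr.
move/H; rewrite lognM ?(prime_gt0 Hp) // logn_prime // eqxx.
have : 0 < logn p e by rewrite logn_gt0 mem_primes Hp He Hpe.
by case: (logn p e).
Qed.

Lemma mu_pndvd p e : prime p -> 0 < e -> ~~ (p %| e) -> moebius (p * e) = Copp (moebius e).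
Proof.
move=> Hp He Hpe; rewrite /moebius.
have Hp0 := prime_gt0 Hp.
have Hpe' : 0 < p * e by rewrite muln_gt0 Hp0.
have Hperm : perm_eq (primes (p * e)) (p :: primes e).
  apply: uniq_perm; first exact: primes_uniq.
    by rewrite /= primes_uniq mem_primes Hp He (negbTE Hpe).
  move=> q; rewrite in_cons !mem_primes Hpe' He /=.
  case Hq: (prime q) => /=; last by case: (q =P p) => // E; move: Hq; rewrite E Hp.
  by rewrite Euclid_dvdM // dvdn_prime2.
rewrite (perm_size Hperm) (perm_all _ Hperm) /=.
rewrite lognM // logn_prime // eqxx (logn_coprime (p:=p)) ?prime_coprime //=.
have -> : all (fun q => logn q (p * e) == 1) (primes e) = all (fun q => logn q e == 1) (primes e).
  apply: eq_in_all => q; rewrite mem_primes => /and3P[Hq _ Hqe].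
  rewrite lognM // logn_prime //.
  by case: (q =P p) => [Eqp|_]; first by move: Hpe; rewrite -Eqp Hqe.
case: ifP => _ /=; last by rewrite /Copp /RtoC /= Ropp_0.
by rewrite /RtoC /Copp /= Ropp_0 Ropp_mult_distr_l_reverse Rmult_1_l.
Qed.

Lemma csum_opp I (r : seq I) (P : pred I) F :
  Copp (\csum_(i <- r | P i) F i) = \csum_(i <- r | P i) Copp (F i).
Proof.
apply: (big_ind2 (fun a b => Copp a = b)); first by ring.
  by move=> a b a' b' <- <-; ring.
by [].
Qed.

Lemma mu_sum : aeq (dconv moebius onef) epsf.
Proof.
move=> n Hn; rewrite /dconv sumCE.
have -> : \csum_(d <- divisors n) Cmult (moebius d) (onef (n %/ d)) = \csum_(d <- divisors n) moebius d.
  by apply: eq_bigr => d _; rewrite /onef; ring.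
case: (ltngtP n 1) => [|Hn1|->].
- by rewrite ltnS leqn0 => /eqP H; move: Hn; rewrite H.
2: by change (divisors 1) with [:: 1]; rewrite big_cons big_nil mu1 /epsf /=; ring.
have Hn1' : (n == 1) = false by case: eqP Hn1 => // ->.
rewrite /epsf Hn1'.
set p := pdiv n.
have Hp : prime p by apply: pdiv_prime.
have Hp0 := prime_gt0 Hp.
have Hpn : p %| n by apply: pdiv_dvd.
set m := n %/ p.
have Hnm : n = p * m by rewrite /m mulnC divnK.
have Hm : 0 < m by move: Hn; rewrite Hnm muln_gt0 => /andP[].
rewrite (bigID (fun d => p %| d)) /=.
have HA : \csum_(d <- divisors n | p %| d) moebius d = Copp (\csum_(e <- divisors m | ~~ (p %| e)) moebius e).
  rewrite -big_filter.
  have Hperm : perm_eq (filter (fun d => p %| d) (divisors n)) (map (muln p) (divisors m)).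
    apply: uniq_perm; first by rewrite filter_uniq ?divisors_uniq.
      rewrite map_inj_uniq ?divisors_uniq // => a b /eqP.
      by rewrite eqn_pmul2l // => /eqP.
    move=> d; rewrite mem_filter mem_div //; apply/andP/mapP => [[H1 H2] | [e He ->]].
      exists (d %/ p); last by rewrite mulnC divnK.
      rewrite mem_div // -(dvdn_pmul2l Hp0) mulnC divnK // -Hnm //.
    move: He; rewrite mem_div // => He; split; first exact: dvdn_mulr.
    by rewrite Hnm dvdn_pmul2l.
  rewrite (perm_big _ Hperm) big_map (bigID (fun e => p %| e)) /=.
  rewrite big1_seq; last first.
    move=> e /andP[H1 H2]; apply: mu_pdvd => //.
    by move: H2; rewrite mem_div // => H2; apply: dvdn_gt0 H2.
  rewrite csum_opp; apply: (etrans (Cplus_0l _)).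
  rewrite big_seq_cond [in RHS]big_seq_cond; apply: eq_bigr => e /andP[H1 H2].
  by rewrite mu_pndvd //; move: H1; rewrite mem_div // => H1; apply: dvdn_gt0 H1.
have HB : \csum_(d <- divisors n | ~~ (p %| d)) moebius d = \csum_(e <- divisors m | ~~ (p %| e)) moebius e.
  rewrite -[LHS]big_filter -[RHS]big_filter; apply: perm_big; apply: uniq_perm; rewrite ?filter_uniq ?divisors_uniq //.
  move=> d; rewrite !mem_filter !mem_div //; case Hd: (p %| d) => //=.
  rewrite Hnm Gauss_dvdr // coprime_sym prime_coprime // Hd //.
rewrite HA HB; ring.
Qed.


Definition Ef : arith := subf (scalf (RtoC 2) epsf) onef.
Definition Gf : arith := dinv Ef.

Lemma C1_neq_0 : RtoC 1 <> RtoC 0.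
Proof. move=> [] H; exact: R1_neq_R0 H. Qed.

Lemma Ef1 : Ef 1 <> RtoC 0.
Proof.
have -> : Ef 1 = RtoC 1 by rewrite /Ef /subf /scalf /epsf /onef /=; ring.
exact: C1_neq_0.
Qed.

Lemma EG : aeq (dconv Ef Gf) epsf.
Proof. exact: dinv_r Ef1. Qed.

Lemma cpow0 n : cpow n (RtoC 0) = RtoC 1.
Proof.
rewrite /cpow /=. rewrite !Rmult_0_l exp_0 cos_0 sin_0.
by rewrite Cmult_1_l.
Qed.

Lemma cpow1 x : cpow 1 x = RtoC 1.
Proof.
rewrite /cpow /= ln_1 !Rmult_0_r exp_0 cos_0 sin_0.
by rewrite Cmult_1_l.
Qed.

Lemma id0 : aeq (idf (RtoC 0)) onef.
Proof. by move=> n _; rewrite /idf cpow0. Qed.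

Lemma sigmaE y : aeq (dsigma y) (dconv (idf y) onef).
Proof.
move=> n _; rewrite /dsigma /dconv !sumCE; apply: eq_bigr => d _.
by rewrite /onef /idf; ring.
Qed.

Lemma kappa_one x n : 0 < n ->
  dconv (kappa x) onef n = Cminus (Cmult (RtoC 2) (kappa x n)) (cpow n x).
Proof.
move=> Hn; rewrite /dconv sumCE dconv_split //.
rewrite [in RHS](kappa_rec x n Hn).
have -> : \csum_(d <- filter (fun d => d < n) (divisors n)) Cmult (kappa x d) (onef (n %/ d))
  = \csum_(d <- filter (fun d => d < n) (divisors n)) kappa x d.
  by apply: eq_bigr => d _; rewrite /onef; ring.
rewrite {1}(kappa_rec x n Hn) /onef; ring.
Qed.

Lemma kappaE x : aeq (dconv (kappa x) Ef) (idf x).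
Proof.
rewrite /Ef dconvBr dconvZr dconv_eps.
move=> n Hn; rewrite /subf /scalf kappa_one // /idf; ring.
Qed.

Lemma swap4 a b c d : aeq (dconv (dconv a c) (dconv b d)) (dconv (dconv a b) (dconv c d)).
Proof.
rewrite dconvA' -(dconvA' c b d) (dconvC' c b) (dconvA' b c d) -dconvA'.
reflexivity.
Qed.

Lemma kappa_id x : aeq (kappa x) (dconv (idf x) Gf).
Proof.
rewrite -kappaE dconvA' EG dconv_eps; reflexivity.
Qed.


Lemma part1 x y : aeq (dconv (kappa x) (dsigma y)) (dconv (kappa y) (dsigma x)).
Proof.
rewrite (kappa_id x) (kappa_id y) (sigmaE y) (sigmaE x).
rewrite (swap4 (idf x) (idf y) Gf onef) (swap4 (idf y) (idf x) Gf onef) (dconvC' (idf y) (idf x)).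
reflexivity.
Qed.

Lemma part2 x : aeq (kappa x) (scalf (Cinv (RtoC 2)) (addf (idf x) (dconv onef (kappa x)))).
Proof.
move=> n Hn; rewrite /scalf /addf dconvC // kappa_one // /idf.
field; move=> [] H; lra.
Qed.

Lemma part4 x : aeq (kappa x) (dconv (jordan x) (kappa (RtoC 0))).
Proof.
rewrite /jordan (kappa_id (RtoC 0)) id0 (swap4 moebius onef (idf x) Gf) mu_sum eps_dconv (kappa_id x).
reflexivity.
Qed.

Lemma kappa1 x : kappa x 1 = RtoC 1.
Proof. by rewrite kappa_rec // cpow1 /=; change (divisors 1) with [:: 1]; rewrite /= big_nil; ring. Qed.

Lemma jordan1 x : jordan x 1 = RtoC 1.
Proof.
rewrite /jordan /dconv /=; change (divisors 1) with [:: 1]; rewrite /= mu1 /idf.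
change (1 %/ 1) with 1; rewrite cpow1; ring.
Qed.

Lemma part5 x : aeq (dinv (kappa x)) (dconv (dinv (jordan x)) (subf (scalf (RtoC 2) moebius) epsf)).
Proof.
symmetry; apply: dinv_unique; first by rewrite kappa1; exact: C1_neq_0.
have H : aeq (subf (scalf (RtoC 2) moebius) epsf) (dconv moebius Ef).
  by rewrite /Ef dconvBr dconvZr dconv_eps mu_sum; reflexivity.
set dJ := dinv (jordan x).
rewrite H (kappa_id x) (dconvC' (dconv (idf x) Gf) (dconv dJ (dconv moebius Ef))).
rewrite (swap4 dJ (idf x) (dconv moebius Ef) Gf) (dconvA' moebius Ef Gf) EG (dconv_eps moebius).
rewrite (dconvA' dJ (idf x) moebius) (dconvC' (idf x) moebius) (dconvC' dJ).
apply: dinv_r => H0; apply: C1_neq_0; rewrite -(jordan1 x); exact: H0.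
Qed.

Lemma part6 x : aeq (dsigma x) (dconv (kappa x) (subf (scalf (RtoC 2) onef) ndiv)).
Proof.
have H6 : aeq (subf (scalf (RtoC 2) onef) (dconv onef onef)) (dconv onef Ef).
  by rewrite /Ef (dconvBr (scalf (RtoC 2) epsf) onef onef) (dconvZr (RtoC 2) epsf onef) (dconv_eps onef); reflexivity.
rewrite /ndiv (sigmaE (RtoC 0)) id0 H6 (dconvC' onef Ef) -(dconvA' (kappa x) Ef onef) (kappaE x).
exact: sigmaE.
Qed.


Definition proper n := filter (fun d => d < n) (divisors n).
Definition Tk x k := dconv (onepow k) (idf x).
Definition ak x k n := Cmult (RtoC ((/ 2) ^ (S k))%R) (Tk x k n).
Definition Pk x K n := \csum_(k <- iota 0 K) ak x k n.

Lemma RtoC_mult (a b : R) : RtoC (a * b)%R = Cmult (RtoC a) (RtoC b).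
Proof. rewrite /Cmult /RtoC /=; f_equal; ring. Qed.

Lemma Tk0 x n : 0 < n -> Tk x 0 n = cpow n x.
Proof. move=> Hn; rewrite /Tk /=; exact: eps_dconv. Qed.

Lemma TkS x k n : 0 < n -> Tk x k.+1 n = Cplus (Tk x k n) (\csum_(d <- proper n) Tk x k d).
Proof.
move=> Hn; rewrite /Tk /= dconvA // dconvC // /dconv sumCE dconv_split //.
rewrite /onef /proper Cmult_1_r; congr Cplus; apply: eq_bigr => d _; ring.
Qed.

Lemma ak0 x n : 0 < n -> ak x 0 n = Cmult (RtoC (/2)%R) (cpow n x).
Proof. by move=> Hn; rewrite /ak Tk0 // /= Rmult_1_r. Qed.

Lemma akS x k n : 0 < n ->
  ak x k.+1 n = Cmult (RtoC (/2)%R) (Cplus (ak x k n) (\csum_(d <- proper n) ak x k d)).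
Proof.
move=> Hn; rewrite /ak TkS // -[in RHS]csum_mull.
have -> : ((/ 2) ^ k.+2)%R = (/2 * (/ 2) ^ k.+1)%R by [].
rewrite RtoC_mult; ring.
Qed.

Lemma PkS x K n : 0 < n ->
  Pk x K.+1 n = Cmult (RtoC (/2)%R) (Cplus (Cplus (cpow n x) (\csum_(d <- proper n) Pk x K d)) (Pk x K n)).
Proof.
move=> Hn; rewrite /Pk.
have -> : iota 0 K.+1 = 0 :: map S (iota 0 K) by rewrite /= -(iotaDl 1).
rewrite big_cons big_map ak0 //.
have -> : \csum_(k <- iota 0 K) ak x k.+1 n =
   Cmult (RtoC (/2)%R) (Cplus (\csum_(k <- iota 0 K) ak x k n)
       (\csum_(d <- proper n) \csum_(k <- iota 0 K) ak x k d)).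
  rewrite (exchange_big _ _ (iota 0 K)) -big_split csum_mull /=.
  by apply: eq_bigr => k _; rewrite akS.
ring.
Qed.

Lemma PkSr x K n : Pk x K.+1 n = Cplus (Pk x K n) (ak x K n).
Proof.
rewrite /Pk -addn1 iotaD big_cat /= big_cons big_nil add0n.
rewrite Cplus_0_r; reflexivity.
Qed.

Lemma sum_nP x n K : sum_n (fun k => ak x k n) K = Pk x K.+1 n.
Proof.
elim: K => [|K IH].
  by rewrite sum_O PkSr /Pk big_nil Cplus_0_l.
rewrite sum_Sn IH [in RHS]PkSr; reflexivity.
Qed.

Lemma lim_csum (pr : C -> R) (Hadd : forall a b, pr (Cplus a b) = (pr a + pr b)%R)
  (H0 : pr (RtoC 0) = 0%R) (l : seq nat) (F : nat -> nat -> C) (L : nat -> C) :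
  (forall d, d \in l -> is_lim_seq (fun K => pr (F K d)) (pr (L d))) ->
  is_lim_seq (fun K => pr (\csum_(d <- l) F K d)) (pr (\csum_(d <- l) L d)).
Proof.
elim: l => [|a l IH] H.
  rewrite big_nil H0; apply: (is_lim_seq_ext (fun _ => 0%R)); last exact: is_lim_seq_const.
  by move=> K; rewrite big_nil H0.
rewrite big_cons Hadd.
apply: (is_lim_seq_ext (fun K => pr (F K a) + pr (\csum_(d <- l) F K d))%R).
  by move=> K; rewrite big_cons Hadd.
apply: is_lim_seq_plus'.
  by apply: H; rewrite in_cons eqxx.
by apply: IH => d Hd; apply: H; rewrite in_cons Hd orbT.
Qed.

Lemma Pk_lim x (pr : C -> R) (Hadd : forall a b, pr (Cplus a b) = (pr a + pr b)%R)
  (H0 : pr (RtoC 0) = 0%R) (Hsc : forall r z, pr (Cmult (RtoC r) z) = (r * pr z)%R) n :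
  0 < n -> is_lim_seq (fun K => pr (Pk x K n)) (pr (kappa x n)).
Proof.
elim/ltn_ind: n => n IH Hn.
apply: (lim_avg _ (fun K => pr (Cplus (cpow n x) (\csum_(d <- proper n) Pk x K d)))).
  rewrite (kappa_rec x n Hn) Hadd.
  apply: (is_lim_seq_ext (fun K => pr (cpow n x) + pr (\csum_(d <- proper n) Pk x K d))%R).
    by move=> K; rewrite Hadd.
  apply: is_lim_seq_plus'; first exact: is_lim_seq_const.
  apply: lim_csum => // d Hd.
  have [Hd0 Hdn] := proper_pos _ _ Hn Hd.
  exact: IH.
move=> K; rewrite PkS // Hsc Hadd; lra.
Qed.

Lemma part3 x n : 0 < n ->
  is_series (fun k : nat => Cmult (RtoC ((/ 2) ^ (S k))%R) (dconv (onepow k) (idf x) n)) (kappa x n).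
Proof.
move=> Hn; rewrite /is_series.
apply: (filterlim_ext (fun K => Pk x K.+1 n)).
  by move=> K; rewrite -sum_nP.
apply: Clim_comp.
  apply: (proj1 (is_lim_seq_incr_1 (fun K => fst (Pk x K n)) _)).
  apply: Pk_lim => //; move=> *; simpl; ring.
apply: (proj1 (is_lim_seq_incr_1 (fun K => snd (Pk x K n)) _)).
apply: Pk_lim => //; move=> *; simpl; ring.
Qed.


Theorem theorem2 (x y : C) :
  (* 1 *) aeq (dconv (kappa x) (dsigma y)) (dconv (kappa y) (dsigma x)) /\
  (* 2 *) aeq (kappa x) (scalf (Cinv (RtoC 2)) (addf (idf x) (dconv onef (kappa x)))) /\
  (* 3 *) (forall n : nat, (0 < n)%N ->
             is_series (fun k : nat =>
                 Cmult (RtoC ((/ 2) ^ (S k))%R) (dconv (onepow k) (idf x) n))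
               (kappa x n)) /\
  (* 4 *) aeq (kappa x) (dconv (jordan x) (kappa (RtoC 0))) /\
  (* 5 *) aeq (dinv (kappa x)) (dconv (dinv (jordan x)) (subf (scalf (RtoC 2) moebius) epsf)) /\
  (* 6 *) aeq (dsigma x) (dconv (kappa x) (subf (scalf (RtoC 2) onef) ndiv)).
Proof.
split; first exact: part1.
split; first exact: part2.
split; first by move=> n Hn; exact: part3.
split; first exact: part4.
split; first exact: part5.
exact: part6.
Qed.
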